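(* Let $\epsilon_0>0$ and let $\beta_*:[-8\epsilon_0,8\epsilon_0]\to\mathbb{R}$ be smooth with $\beta_*(t)=t$ for $t\in[-8\epsilon_0,-4\epsilon_0]\cup[4\epsilon_0,8\epsilon_0]$, $\beta_*(t)=0$ for $t\in[-2\epsilon_0,2\epsilon_0]$, $\beta_*'(t)>0$ for $t\in[-4\epsilon_0,-2\epsilon_0)\cup(2\epsilon_0,4\epsilon_0]$, $\beta_*''<0$ on $(-4\epsilon_0,-2\epsilon_0)$ and $\beta_*''>0$ on $(2\epsilon_0,4\epsilon_0)$. For $L>0$ define $\beta_L:[-L-8\epsilon_0,L+8\epsilon_0]\to\mathbb{R}$ by $\beta_L(t)=\beta_*(t+L)$ on $[-L-8\epsilon_0,-L]$, $\beta_L(t)=0$ on $[-L,L]$, $\beta_L(t)=\beta_*(t-L)$ on $[L,L+8\epsilon_0]$. Let $\kappa_*\ge1$. Then there is a constant $L(\epsilon_0,\kappa_*,\beta_* )\ge1$ depending only on $\epsilon_0$, $\kappa_*$ and $\beta_*$ such that for every $L\ge L(\epsilon_0,\kappa_*,\beta_* )$ there is a smooth function $h_L:[-L-8\epsilon_0,L+8\epsilon_0]\to[-8\epsilon_0,8\epsilon_0]$ with: $h_L'(t)>0$ everywhere; $h_L=\beta_L$ on a neighborhood of $[-L-8\epsilon_0,-L-11\epsilon_0/4]$ and of $[L+11\epsilon_0/4,L+8\epsilon_0]$; $\sup|h_L-\beta_L|\le100\kappa_*^{-1}L^{-1}$; and $h_L'(t)\ge\tfrac12\kappa_*^{-1}L^{-2}$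 for all $t$. *)

(* Defs.v *)
From Stdlib Require Import Reals.
From Coquelicot Require Import Coquelicot.
Open Scope R_scope.

(* A function defined on the closed interval [a,b] is smooth if it agrees on
   [a,b] with a function that is infinitely differentiable on an open interval
   (a - d, b + d) containing [a,b]. *)
Definition smooth_open (g : R -> R) (a b d : R) : Prop :=
  forall (n : nat) (x : R), a - d < x < b + d -> ex_derive_n g n x.

Definition smooth_on (a b : R) (f : R -> R) : Prop :=
  exists (g : R -> R) (d : R), 0 < d /\
    (forall x, a <= x <= b -> g x = f x) /\ smooth_open g a b d.

Definition beta_L (bs : R -> R) (L : R) (t : R) : R :=
  if Rle_dec t (- L) then bs (t + L)
  else if Rle_dec t L then 0 else bs (t - L).

(* Main.v *)
Require Import Defs.
From Stdlib Require Import Reals Lra.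
From Coquelicot Require Import Coquelicot.
Open Scope R_scope.

Definition Cinf (f : R -> R) := forall n x, ex_derive_n f n x.

Lemma loc_int (f g : R -> R) l r x : l < x < r ->
  (forall y, l < y < r -> f y = g y) -> locally x (fun y => f y = g y).
Proof.
  intros Hx H. assert (Hp: 0 < Rmin (x - l) (r - x)) by (apply Rmin_pos; lra).
  exists (mkposreal _ Hp). intros y Hy. apply H.
  assert (Hy' : Rabs (y - x) < Rmin (x - l) (r - x)) by exact Hy.
  pose proof (Rmin_l (x - l) (r - x)). pose proof (Rmin_r (x - l) (r - x)).
  apply Rabs_def2 in Hy'. lra.
Qed.

Lemma Cinf_loc f : (forall x, exists g, locally x (fun y => g y = f y) /\ forall n, ex_derive_n g n x) -> Cinf f.
Proof.
  intros H n x. destruct (H x) as [g [Hl Hg]]. eapply ex_derive_n_ext_loc; eauto.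
Qed.

Lemma Cinf_const a : Cinf (fun _ => a).
Proof. intros n x. apply ex_derive_n_const. Qed.

Lemma Cinf_id : Cinf (fun y => y).
Proof. intros n x. apply (ex_derive_n_ext (fun y => y ^ 1)). intros; apply pow_1. apply ex_derive_n_pow. Qed.

Lemma Cinf_plus f g : Cinf f -> Cinf g -> Cinf (fun y => f y + g y).
Proof. intros Hf Hg n x. apply ex_derive_n_plus; apply filter_forall; intros; auto. Qed.

Lemma Cinf_minus f g : Cinf f -> Cinf g -> Cinf (fun y => f y - g y).
Proof. intros Hf Hg n x. apply ex_derive_n_minus; apply filter_forall; intros; auto. Qed.

Lemma Cinf_scal a f : Cinf f -> Cinf (fun y => a * f y).
Proof. intros Hf n x. apply ex_derive_n_scal_l; auto. Qed.

Lemma Cinf_trans f q : Cinf f -> Cinf (fun y => f (y + q)).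
Proof. intros Hf n x. apply ex_derive_n_comp_trans; auto. Qed.

Lemma Cinf_scomp f k : Cinf f -> Cinf (fun y => f (k * y)).
Proof. intros Hf n x. apply ex_derive_n_comp_scal; apply filter_forall; intros; auto. Qed.

Lemma Cinf_ex_derive f x : Cinf f -> ex_derive f x.
Proof. intros H. exact (H 1%nat x). Qed.

Lemma exn2_cont f x : ex_derive_n f 2 x -> continuity_pt (Derive f) x.
Proof. intros H. apply continuity_pt_filterlim. apply (@ex_derive_continuous R_AbsRing R_NormedModule (Derive f) x). exact H. Qed.

Lemma cont_zero_right F x0 r : 0 < r -> continuity_pt F x0 ->
  (forall y, x0 < y < x0 + r -> F y = 0) -> F x0 = 0.
Proof.
  intros Hr Hc H. destruct (Req_dec (F x0) 0) as [|Hn]; auto. exfalso.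
  destruct (Hc (Rabs (F x0)) (Rabs_pos_lt _ Hn)) as [al [Hal Hal2]].
  assert (0 < Rmin al r) by (apply Rmin_pos; lra).
  pose proof (Rmin_l al r). pose proof (Rmin_r al r).
  specialize (Hal2 (x0 + Rmin al r / 2)). rewrite H in Hal2 by lra.
  assert (HH : R_dist 0 (F x0) < Rabs (F x0)).
  { apply Hal2. split; [split; [constructor|lra]|]. simpl; unfold R_dist. rewrite Rabs_right; lra. }
  unfold R_dist in HH. rewrite Rminus_0_l, Rabs_Ropp in HH. lra.
Qed.

Lemma cont_zero_left F x0 r : 0 < r -> continuity_pt F x0 ->
  (forall y, x0 - r < y < x0 -> F y = 0) -> F x0 = 0.
Proof.
  intros Hr Hc H. destruct (Req_dec (F x0) 0) as [|Hn]; auto. exfalso.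
  destruct (Hc (Rabs (F x0)) (Rabs_pos_lt _ Hn)) as [al [Hal Hal2]].
  assert (0 < Rmin al r) by (apply Rmin_pos; lra).
  pose proof (Rmin_l al r). pose proof (Rmin_r al r).
  specialize (Hal2 (x0 - Rmin al r / 2)). rewrite H in Hal2 by lra.
  assert (HH : R_dist 0 (F x0) < Rabs (F x0)).
  { apply Hal2. split; [split; [constructor|lra]|]. simpl; unfold R_dist. rewrite Rabs_left; lra. }
  unfold R_dist in HH. rewrite Rminus_0_l, Rabs_Ropp in HH. lra.
Qed.

Lemma Rabs_le_bt x M : Rabs x <= M -> -M <= x <= M.
Proof. unfold Rabs; destruct Rcase_abs; lra. Qed.

Lemma incr_of_deriv f a b : a <= b -> Cinf f ->
  (forall x, a <= x <= b -> 0 < Derive f x) -> f a <= f b.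
Proof.
  intros Hab Hf Hd. destruct (Req_dec a b) as [->|Hne]; [lra|].
  destruct (MVT_cor2 f (Derive f) a b) as [c [Hc1 Hc2]]; [lra| |].
  - intros c _. apply is_derive_Reals. apply Derive_correct. apply Cinf_ex_derive; auto.
  - assert (0 < Derive f c) by (apply Hd; lra). nra.
Qed.

Lemma construct (e kappa m M : R) (Hn G : R -> R) (bL : R -> R -> R) :
  0 < e -> 1 <= kappa -> 0 < m -> m <= 1 -> 1 <= M ->
  Cinf Hn -> Cinf G ->
  (forall u, u <= 2*e -> G u = 0) ->
  (forall u, 4*e <= u -> G u = u) ->
  (forall u, 2*e <= u <= 4*e -> 0 <= G u <= 4*e) ->
  (forall u, u < 2*e -> Derive G u = 0) ->
  (forall u, 4*e < u -> Derive G u = 1) ->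
  (forall u, Rabs (Derive G u) <= M) ->
  (forall u, -2*e < u -> Hn u = 0) ->
  (forall u, -2*e < u -> Derive Hn u = 0) ->
  (forall u, -8*e <= u -> 0 <= Derive Hn u) ->
  (forall u, u <= 8*e -> 0 <= Derive G u) ->
  (forall u, -8*e <= u <= -9*e/4 -> m <= Derive Hn u) ->
  (forall u, 9*e/4 <= u <= 8*e -> m <= Derive G u) ->
  (forall L, 30*e <= L -> forall t, -L-8*e <= t <= L+8*e -> bL L t = Hn (t+L) + G (t + -L)) ->
  Hn (-8*e) = -8*e -> G (8*e) = 8*e ->
    exists L0 : R, 1 <= L0 /\
      forall L : R, L0 <= L ->
        exists (h : R -> R) (d : R), 0 < d /\
          smooth_open h (- L - 8 * e) (L + 8 * e) d /\
          (forall t, - L - 8 * e <= t <= L + 8 * e ->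
             -8 * e <= h t <= 8 * e) /\
          (forall t, - L - 8 * e <= t <= L + 8 * e -> Derive h t > 0) /\
          (exists eta : R, 0 < eta /\
             (forall t, - L - 8 * e <= t <= - L - 11 * e / 4 + eta ->
                h t = bL L t) /\
             (forall t, L + 11 * e / 4 - eta <= t <= L + 8 * e ->
                h t = bL L t)) /\
          (forall t, - L - 8 * e <= t <= L + 8 * e ->
             Rabs (h t - bL L t) <= 100 / (kappa * L)) /\
          (forall t, - L - 8 * e <= t <= L + 8 * e ->
             Derive h t >= 1 / 2 * / kappa * / (L ^ 2)).
Proof.
  intros He Hk Hm Hm1 HM CHn CG G0 G1 Gb DG0 DG1 DGM Hn0 DHn0 DHnp DGp DHnm DGm HbL Hn8 G8.
  set (K := 2*M + 48*M/e).
  assert (HK : 2 <= K). { unfold K. assert (0 <= 48*M/e) by (apply Rmult_le_pos; [lra| left; apply Rinv_0_lt_compat; lra]). lra. }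
  exists (Rmax 1 (Rmax (30*e) (2*K/m))). split; [apply Rmax_l|]. intros L HL.
  assert (HL1 : 1 <= L) by (eapply Rle_trans; [apply Rmax_l|exact HL]).
  assert (HL30 : 30*e <= L) by (eapply Rle_trans; [|exact HL]; eapply Rle_trans; [|apply Rmax_r]; apply Rmax_l).
  assert (HLm : 2*K/m <= L) by (eapply Rle_trans; [|exact HL]; eapply Rle_trans; [|apply Rmax_r]; apply Rmax_r).
  assert (HmL : 2*K <= m * L).
  { apply (Rmult_le_compat_l m) in HLm; [|lra]. replace (m * (2*K/m)) with (2*K) in HLm by (field; lra). lra. }
  set (w := e/8). set (a := -L - 5*e/2). set (b := L + 9*e/4). set (D := b - a).
  set (c := 1 / (kappa * L^2)). set (q := 2*e - 16*a).
  set (Psi := fun s => /16 * G (16*s + q)).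
  set (h := fun t => Hn (t + L) + G (t + -L) + c * ((Psi t - Psi (t + -D)) - D/w * (Psi t - Psi (t + -w)))).
  assert (Ha : a = -L - 5*e/2) by reflexivity. assert (Hb : b = L + 9*e/4) by reflexivity.
  assert (Hwd : w = e/8) by reflexivity. assert (Hq : q = 2*e - 16*a) by reflexivity.
  assert (Hc : 0 < c). { unfold c. apply Rdiv_lt_0_compat; [lra|]. apply Rmult_lt_0_compat; [lra|]. apply pow_lt; lra. }
  assert (HX : D / w = (16*L + 38*e)/e). { unfold D, w, a, b. field. lra. }
  assert (Hw : 0 < w) by (unfold w; lra).
  assert (HD : D = 2*L + 19*e/4). { unfold D, b, a. field. }
  assert (HXp : 0 <= D / w). { apply Rlt_le, Rdiv_lt_0_compat; lra. }
  assert (HXw : D / w * w = D) by (field; lra).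
  assert (Gpos : forall u, 0 <= G u).
  { intros u. destruct (Rle_lt_dec u (2*e)). rewrite G0; lra.
    destruct (Rle_lt_dec u (4*e)). apply Gb; lra. rewrite G1; lra. }
  assert (Gub : forall u B, u <= B -> 0 <= B -> G u <= B + 4*e).
  { intros u B H1 H2. destruct (Rle_lt_dec u (2*e)). rewrite G0; lra.
    destruct (Rle_lt_dec u (4*e)). pose proof (Gb u); lra. rewrite G1; lra. }
  assert (Psi0 : forall s, s <= a -> Psi s = 0).
  { intros s Hs. unfold Psi. rewrite G0; [ring| unfold q; lra]. }
  assert (Psi1 : forall s, a + w <= s -> Psi s = s - a + w).
  { intros s Hs. unfold Psi. rewrite G1; [unfold q, w; field | unfold q, w in *; lra]. }
  assert (Psipos : forall s, 0 <= Psi s).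
  { intros s. unfold Psi. pose proof (Gpos (16*s+q)). lra. }
  assert (Psiub : forall s B, 16*s+q <= B -> 0 <= B -> Psi s <= /16*(B+4*e)).
  { intros s B H1 H2. unfold Psi. pose proof (Gub _ _ H1 H2). lra. }
  assert (CPsi : Cinf Psi) by exact (Cinf_scal (/16) _ (Cinf_scomp _ 16 (Cinf_trans G q CG))).
  assert (Ch : Cinf h).
  { unfold h. apply Cinf_plus. apply Cinf_plus. exact (Cinf_trans Hn L CHn). exact (Cinf_trans G (-L) CG).
    apply Cinf_scal. apply Cinf_minus. apply Cinf_minus. exact CPsi. exact (Cinf_trans Psi (-D) CPsi).
    apply Cinf_scal. apply Cinf_minus. exact CPsi. exact (Cinf_trans _ _ CPsi). }
  assert (Hdh : forall t, Derive h t = Derive Hn (t+L) + Derive G (t + -L) + c*((Derive G (16*t+q) - Derive G (16*(t + -D)+q)) - D/w*(Derive G (16*t+q) - Derive G (16*(t + -w)+q)))).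
  { intros t. apply is_derive_unique. unfold h, Psi. auto_derive.
    - repeat split; apply Cinf_ex_derive; auto.
    - change (fun x : R => G x) with G; change (fun x : R => Hn x) with Hn. field; unfold w; lra. }
  assert (Hleft : forall t, t <= a -> h t = Hn (t+L) + G (t + -L)).
  { intros t Ht. unfold h. rewrite !Psi0 by lra. ring. }
  assert (Hright : forall t, b + w <= t -> h t = Hn (t+L) + G (t + -L)).
  { intros t Ht. unfold h. rewrite !Psi1 by (unfold D; unfold a, b, w in *; lra).
    replace (t - a + w - (t + - D - a + w) - D / w * (t - a + w - (t + - w - a + w))) with (D - D / w * w) by ring.
    rewrite HXw. ring. }
  assert (HY : 30*M <= M*L/e).
  { assert (30 <= L/e). { apply (Rmult_le_reg_r e); [lra|]. replace (L/e*e) with L by (field; lra). lra. }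
    replace (M*L/e) with (M*(L/e)) by (field; lra). nra. }
  assert (HP : 2*M + 2*M*(D/w) <= K*L).
  { rewrite HX. unfold K.
    replace (2*M*((16*L+38*e)/e)) with (32*(M*L/e) + 76*M) by (field; lra).
    replace ((2*M + 48*M/e)*L) with (2*M*L + 48*(M*L/e)) by (field; lra).
    assert (M*L >= M) by nra. lra. }
  assert (HcKL : c*(K*L) <= m/2).
  { replace (c*(K*L)) with (K/(kappa*L)) by (unfold c; field; lra).
    apply (Rmult_le_reg_r (2*kappa*L)); [nra|].
    replace (K/(kappa*L)*(2*kappa*L)) with (2*K) by (field; lra).
    replace (m/2*(2*kappa*L)) with (m*L*kappa) by field.
    assert (0 < m*L) by nra. nra. }
  assert (HcP : c*(2*M + 2*M*(D/w)) <= m/2).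
  { eapply Rle_trans; [|exact HcKL]. apply Rmult_le_compat_l; lra. }
  assert (Hcm : c <= m/4).
  { assert (2 <= K*L) by nra. nra. }
  assert (Hlow : 1 / 2 * / kappa * / (L ^ 2) = c/2) by (unfold c; field; lra).
  assert (Hder : forall t, - L - 8 * e <= t <= L + 8 * e -> Derive h t >= c/2).
  { intros t Ht. rewrite Hdh.
    set (s1 := Derive G (16*t+q)). set (s2 := Derive G (16*(t + -D)+q)). set (s3 := Derive G (16*(t + -w)+q)).
    destruct (Rle_lt_dec t (a + 2*w)) as [H1|H1].
    - assert (m <= Derive Hn (t+L)) by (apply DHnm; unfold a, w in *; lra).
      rewrite (DG0 (t + -L)) by lra.
      pose proof (Rabs_le_bt _ _ (DGM (16*t+q))). pose proof (Rabs_le_bt _ _ (DGM (16*(t + -D)+q))).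
      pose proof (Rabs_le_bt _ _ (DGM (16*(t + -w)+q))). fold s1 s2 s3 in H0, H2, H3.
      assert (D/w*(s1 - s3) <= D/w*(2*M)) by (apply Rmult_le_compat_l; lra).
      assert (-(2*M + 2*M*(D/w)) <= (s1 - s2) - D/w*(s1 - s3)) by lra.
      assert (c*(-(2*M + 2*M*(D/w))) <= c*((s1 - s2) - D/w*(s1 - s3))) by (apply Rmult_le_compat_l; lra).
      lra.
    - destruct (Rlt_le_dec t b) as [H2|H2].
      + assert (s1 = 1) by (apply DG1; unfold q, w in *; lra).
        assert (s2 = 0) by (apply DG0; unfold q, D in *; lra).
        assert (s3 = 1) by (apply DG1; unfold q, w in *; lra).
        rewrite H, H0, H3.
        pose proof (DHnp (t+L)). pose proof (DGp (t + -L)). 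
        assert (0 <= Derive Hn (t+L)) by (apply DHnp; lra).
        assert (0 <= Derive G (t + -L)) by (apply DGp; lra). nra.
      + assert (m <= Derive G (t + -L)) by (apply DGm; unfold b in *; lra).
        rewrite (DHn0 (t + L)) by lra.
        pose proof (Rabs_le_bt _ _ (DGM (16*t+q))). pose proof (Rabs_le_bt _ _ (DGM (16*(t + -D)+q))).
        pose proof (Rabs_le_bt _ _ (DGM (16*(t + -w)+q))). fold s1 s2 s3 in H0, H3, H4.
        assert (D/w*(s1 - s3) <= D/w*(2*M)) by (apply Rmult_le_compat_l; lra).
        assert (-(2*M + 2*M*(D/w)) <= (s1 - s2) - D/w*(s1 - s3)) by lra.
        assert (c*(-(2*M + 2*M*(D/w))) <= c*((s1 - s2) - D/w*(s1 - s3))) by (apply Rmult_le_compat_l; lra).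
        lra. }
  exists h, 1. split; [lra|]. split.
  { intros n x _. apply Ch. }
  split.
  { intros t Ht.
    assert (Hl : h (-L - 8*e) = -8*e).
    { rewrite Hleft by (unfold a; lra). replace (-L - 8*e + L) with (-8*e) by ring.
      rewrite G0 by lra. rewrite Hn8. ring. }
    assert (Hr : h (L + 8*e) = 8*e).
    { rewrite Hright by (unfold b, w; lra). replace (L + 8*e + -L) with (8*e) by ring.
      rewrite Hn0 by lra. rewrite G8. ring. }
    split.
    - rewrite <- Hl. apply incr_of_deriv; [lra|auto|]. intros x Hx. pose proof (Hder x). lra.
    - rewrite <- Hr. apply incr_of_deriv; [lra|auto|]. intros x Hx. pose proof (Hder x). lra. }
  split.
  { intros t Ht. pose proof (Hder t Ht). lra. }
  split.
  { exists (e/8). split; [lra|]. split.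
    - intros t Ht. rewrite (HbL L HL30 t) by lra. apply Hleft. unfold a; lra.
    - intros t Ht. rewrite (HbL L HL30 t) by lra. apply Hright. unfold b, w; lra. }
  split.
  { intros t Ht. rewrite (HbL L HL30 t Ht).
    replace (h t - (Hn (t + L) + G (t + - L))) with (c * ((Psi t - Psi (t + -D)) - D/w * (Psi t - Psi (t + -w)))) by (unfold h; ring).
    assert (HA1 : Rabs (Psi t - Psi (t + -D)) <= 2*L + 11*e).
    { pose proof (Psipos t). pose proof (Psipos (t + -D)).
      assert (Psi t <= /16*((32*L + 170*e) + 4*e)) by (apply Psiub; lra).
      assert (Psi (t + -D) <= /16*((32*L + 170*e) + 4*e)) by (apply Psiub; lra).
      apply Rabs_le. lra. }
    assert (HA2 : Rabs (Psi t - Psi (t + -w)) <= 5*w).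
    { destruct (Rle_lt_dec (a + 2*w) t).
      - rewrite !Psi1 by lra. replace (t - a + w - (t + - w - a + w)) with w by ring. rewrite Rabs_right; lra.
      - pose proof (Psipos t). pose proof (Psipos (t + -w)).
        assert (Psi t <= /16*(6*e + 4*e)) by (apply Psiub; lra).
        assert (Psi (t + -w) <= /16*(6*e + 4*e)) by (apply Psiub; lra).
        apply Rabs_le. lra. }
    apply Rabs_le_bt in HA1. apply Rabs_le_bt in HA2.
    assert (HXA : Rabs (D/w * (Psi t - Psi (t + -w))) <= 5*D).
    { rewrite Rabs_mult, (Rabs_right (D/w)) by lra. apply Rle_trans with (D/w * (5*w)).
      { apply Rmult_le_compat_l; [lra|]. apply Rabs_le; lra. }
      replace (D/w*(5*w)) with (5*(D/w*w)) by ring. rewrite HXw. lra. }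
    apply Rabs_le_bt in HXA.
    rewrite Rabs_mult, (Rabs_right c) by lra.
    apply Rle_trans with (c * (14*L)).
    - apply Rmult_le_compat_l; [lra|]. apply Rabs_le. lra.
    - replace (c*(14*L)) with (14/(kappa*L)) by (unfold c; field; lra).
      unfold Rdiv. apply Rmult_le_compat_r; [left; apply Rinv_0_lt_compat; nra|lra]. }
  intros t Ht. rewrite Hlow. apply Hder; auto.
Qed.

Theorem mainTheorem8 :
  forall (eps0 kappa : R) (bs : R -> R),
    0 < eps0 ->
    smooth_on (-8 * eps0) (8 * eps0) bs ->
    (forall t, (-8 * eps0 <= t <= -4 * eps0 \/ 4 * eps0 <= t <= 8 * eps0) -> bs t = t) ->
    (forall t, -2 * eps0 <= t <= 2 * eps0 -> bs t = 0) ->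
    (forall t, (-4 * eps0 <= t < -2 * eps0 \/ 2 * eps0 < t <= 4 * eps0) -> Derive bs t > 0) ->
    (forall t, -4 * eps0 < t < -2 * eps0 -> Derive_n bs 2 t < 0) ->
    (forall t, 2 * eps0 < t < 4 * eps0 -> Derive_n bs 2 t > 0) ->
    1 <= kappa ->
    exists L0 : R, 1 <= L0 /\
      forall L : R, L0 <= L ->
        exists (h : R -> R) (d : R), 0 < d /\
          smooth_open h (- L - 8 * eps0) (L + 8 * eps0) d /\
          (forall t, - L - 8 * eps0 <= t <= L + 8 * eps0 ->
             -8 * eps0 <= h t <= 8 * eps0) /\
          (forall t, - L - 8 * eps0 <= t <= L + 8 * eps0 -> Derive h t > 0) /\
          (exists eta : R, 0 < eta /\
             (forall t, - L - 8 * eps0 <= t <= - L - 11 * eps0 / 4 + eta ->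
                h t = beta_L bs L t) /\
             (forall t, L + 11 * eps0 / 4 - eta <= t <= L + 8 * eps0 ->
                h t = beta_L bs L t)) /\
          (forall t, - L - 8 * eps0 <= t <= L + 8 * eps0 ->
             Rabs (h t - beta_L bs L t) <= 100 / (kappa * L)) /\
          (forall t, - L - 8 * eps0 <= t <= L + 8 * eps0 ->
             Derive h t >= 1 / 2 * / kappa * / (L ^ 2)).
Proof.
  intros e kappa bs He Hsm Hlin Hzero Hpos _ _ Hk.
  destruct Hsm as [g [d [Hd [Hgeq Hgs]]]].
  assert (Hbsn : forall x, -8*e < x < 8*e -> forall n, ex_derive_n bs n x).
  { intros x Hx n. apply (ex_derive_n_ext_loc g bs).
    - apply (loc_int g bs (-8*e) (8*e)); auto. intros y Hy; apply Hgeq; lra.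
    - apply Hgs; lra. }
  set (Bs := fun u => if Rle_dec u (-6*e) then u else if Rle_dec u (6*e) then bs u else u).
  assert (BsE : forall u, -8*e <= u <= 8*e -> Bs u = bs u).
  { intros u Hu. unfold Bs. destruct (Rle_dec u (-6*e)).
    - symmetry; apply Hlin; lra.
    - destruct (Rle_dec u (6*e)); [reflexivity|]. symmetry; apply Hlin; lra. }
  assert (BsI : forall u, u <= -4*e \/ 4*e <= u -> Bs u = u).
  { intros u Hu. unfold Bs. destruct (Rle_dec u (-6*e)); [reflexivity|].
    destruct (Rle_dec u (6*e)); [|reflexivity]. apply Hlin; lra. }
  assert (CBs : Cinf Bs).
  { apply Cinf_loc. intros x. destruct (Rlt_le_dec x (-5*e)).
    - exists (fun y => y). split; [|intros; apply Cinf_id].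
      apply (loc_int (fun y => y) Bs (x-1) (-4*e)); [lra|]. intros; symmetry; apply BsI; lra.
    - destruct (Rlt_le_dec (5*e) x).
      + exists (fun y => y). split; [|intros; apply Cinf_id].
        apply (loc_int (fun y => y) Bs (4*e) (x+1)); [lra|]. intros; symmetry; apply BsI; lra.
      + exists bs. split; [|intros; apply Hbsn; lra].
        apply (loc_int bs Bs (-8*e) (8*e)); [lra|]. intros; symmetry; apply BsE; lra. }
  set (Hn := fun u => if Rle_dec 0 u then 0 else Bs u).
  set (G := fun u => if Rle_dec u 0 then 0 else Bs u).
  assert (HnZ : forall u, -2*e < u -> Hn u = 0).
  { intros u Hu. unfold Hn. destruct (Rle_dec 0 u); [reflexivity|]. rewrite BsE by lra. apply Hzero; lra. }
  assert (HnB : forall u, u < 0 -> Hn u = Bs u).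
  { intros u Hu. unfold Hn. destruct (Rle_dec 0 u); [lra|reflexivity]. }
  assert (GZ : forall u, u <= 2*e -> G u = 0).
  { intros u Hu. unfold G. destruct (Rle_dec u 0); [reflexivity|]. rewrite BsE by lra. apply Hzero; lra. }
  assert (GB : forall u, 0 < u -> G u = Bs u).
  { intros u Hu. unfold G. destruct (Rle_dec u 0); [lra|reflexivity]. }
  assert (CHn : Cinf Hn).
  { apply Cinf_loc. intros x. destruct (Rlt_le_dec (-e) x).
    - exists (fun _ => 0). split; [|intros; apply Cinf_const].
      apply (loc_int (fun _ => 0) Hn (-2*e) (x+1)); [lra|]. intros; symmetry; apply HnZ; lra.
    - exists Bs. split; [|intros; apply CBs].
      apply (loc_int Bs Hn (x-1) 0); [lra|]. intros; symmetry; apply HnB; lra. }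
  assert (CG : Cinf G).
  { apply Cinf_loc. intros x. destruct (Rlt_le_dec x e).
    - exists (fun _ => 0). split; [|intros; apply Cinf_const].
      apply (loc_int (fun _ => 0) G (x-1) (2*e)); [lra|]. intros; symmetry; apply GZ; lra.
    - exists Bs. split; [|intros; apply CBs].
      apply (loc_int Bs G 0 (x+1)); [lra|]. intros; symmetry; apply GB; lra. }
  assert (DBsI : forall u, u < -4*e \/ 4*e < u -> Derive Bs u = 1).
  { intros u Hu. destruct Hu.
    - rewrite (Derive_ext_loc Bs (fun y => y)). exact (Derive_id u).
      apply (loc_int Bs (fun y => y) (u-1) (-4*e)); [lra|]. intros; apply BsI; lra.
    - rewrite (Derive_ext_loc Bs (fun y => y)). exact (Derive_id u).
      apply (loc_int Bs (fun y => y) (4*e) (u+1)); [lra|]. intros; apply BsI; lra. }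
  assert (DBsE : forall u, -8*e < u < 8*e -> Derive Bs u = Derive bs u).
  { intros u Hu. apply Derive_ext_loc. apply (loc_int Bs bs (-8*e) (8*e)); [lra|]. intros; apply BsE; lra. }
  assert (Dbs0 : forall u, -2*e < u < 2*e -> Derive bs u = 0).
  { intros u Hu. rewrite (Derive_ext_loc bs (fun _ => 0)). apply Derive_const.
    apply (loc_int bs (fun _ => 0) (-2*e) (2*e)); [lra|]. intros; apply Hzero; lra. }
  assert (Dbsm2 : Derive bs (-2*e) = 0).
  { apply (cont_zero_right _ _ (4*e)); [lra| |].
    - apply exn2_cont. apply Hbsn; lra.
    - intros y Hy. apply Dbs0; lra. }
  assert (Dbs2 : Derive bs (2*e) = 0).
  { apply (cont_zero_left _ _ (4*e)); [lra| |].
    - apply exn2_cont. apply Hbsn; lra.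
    - intros y Hy. apply Dbs0; lra. }
  assert (DHn0 : forall u, -2*e < u -> Derive Hn u = 0).
  { intros u Hu. rewrite (Derive_ext_loc Hn (fun _ => 0)). apply Derive_const.
    apply (loc_int Hn (fun _ => 0) (-2*e) (u+1)); [lra|]. intros; apply HnZ; lra. }
  assert (DHnB : forall u, u < 0 -> Derive Hn u = Derive Bs u).
  { intros u Hu. apply Derive_ext_loc. apply (loc_int Hn Bs (u-1) 0); [lra|]. intros; apply HnB; lra. }
  assert (DG0 : forall u, u < 2*e -> Derive G u = 0).
  { intros u Hu. rewrite (Derive_ext_loc G (fun _ => 0)). apply Derive_const.
    apply (loc_int G (fun _ => 0) (u-1) (2*e)); [lra|]. intros; apply GZ; lra. }
  assert (DGB : forall u, 0 < u -> Derive G u = Derive Bs u).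
  { intros u Hu. apply Derive_ext_loc. apply (loc_int G Bs 0 (u+1)); [lra|]. intros; apply GB; lra. }
  assert (DG1 : forall u, 4*e < u -> Derive G u = 1).
  { intros u Hu. rewrite DGB by lra. apply DBsI; lra. }
  assert (G1 : forall u, 4*e <= u -> G u = u).
  { intros u Hu. rewrite GB by lra. apply BsI; lra. }
  assert (mono : forall x y, 2*e <= x <= y -> y <= 4*e -> bs x <= bs y).
  { intros x y Hxy Hy. destruct (Req_dec x y) as [->|Hne]; [lra|].
    destruct (MVT_cor2 bs (Derive bs) x y) as [c [Hc1 Hc2]]; [lra| |].
    - intros c Hc. apply is_derive_Reals. apply Derive_correct. exact (Hbsn c ltac:(lra) 1%nat).
    - assert (Derive bs c > 0) by (apply Hpos; lra). nra. }
  assert (Gb : forall u, 2*e <= u <= 4*e -> 0 <= G u <= 4*e).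
  { intros u Hu. rewrite GB by lra. rewrite BsE by lra.
    assert (bs (2*e) = 0) by (apply Hzero; lra). assert (bs (4*e) = 4*e) by (apply Hlin; lra).
    pose proof (mono (2*e) u ltac:(lra) ltac:(lra)). pose proof (mono u (4*e) ltac:(lra) ltac:(lra)). lra. }
  assert (CDG : forall u, continuity_pt (Derive G) u) by (intros u; apply exn2_cont; apply CG).
  destruct (continuity_ab_maj (Derive G) (2*e) (4*e)) as [Mx [HMx _]]; [lra|intros; apply CDG|].
  destruct (continuity_ab_min (Derive G) (2*e) (4*e)) as [mx [Hmx _]]; [lra|intros; apply CDG|].
  set (M := Rmax 1 (Rmax (Derive G Mx) (- Derive G mx))).
  assert (HM1 : 1 <= M) by apply Rmax_l.
  assert (HM2 : Derive G Mx <= M) by (unfold M; eapply Rle_trans; [|apply Rmax_r]; apply Rmax_l).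
  assert (HM3 : - Derive G mx <= M) by (unfold M; eapply Rle_trans; [|apply Rmax_r]; apply Rmax_r).
  assert (DGM : forall u, Rabs (Derive G u) <= M).
  { intros u. apply Rabs_le. destruct (Rlt_le_dec u (2*e)).
    - rewrite DG0 by lra. lra.
    - destruct (Rlt_le_dec (4*e) u).
      + rewrite DG1 by lra. lra.
      + pose proof (HMx u ltac:(lra)). pose proof (Hmx u ltac:(lra)). lra. }
  destruct (continuity_ab_min (Derive bs) (-4*e) (-9*e/4)) as [p1 [Hp1 Hp1']]; [lra|intros; apply exn2_cont; apply Hbsn; lra|].
  destruct (continuity_ab_min (Derive bs) (9*e/4) (4*e)) as [p2 [Hp2 Hp2']]; [lra|intros; apply exn2_cont; apply Hbsn; lra|].
  assert (Hq1 : Derive bs p1 > 0) by (apply Hpos; lra).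
  assert (Hq2 : Derive bs p2 > 0) by (apply Hpos; lra).
  set (m := Rmin 1 (Rmin (Derive bs p1) (Derive bs p2))).
  assert (Hm0 : 0 < m) by (unfold m; apply Rmin_pos; [lra|apply Rmin_pos; lra]).
  assert (Hm1 : m <= 1) by apply Rmin_l.
  assert (Hmp1 : m <= Derive bs p1) by (unfold m; eapply Rle_trans; [apply Rmin_r|apply Rmin_l]).
  assert (Hmp2 : m <= Derive bs p2) by (unfold m; eapply Rle_trans; [apply Rmin_r|apply Rmin_r]).
  assert (DHnp : forall u, -8*e <= u -> 0 <= Derive Hn u).
  { intros u Hu. destruct (Rlt_le_dec (-2*e) u). rewrite DHn0 by lra; lra.
    rewrite DHnB by lra. destruct (Rlt_le_dec u (-4*e)). rewrite DBsI by lra; lra.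
    rewrite DBsE by lra. destruct (Req_dec u (-2*e)) as [->|]. lra.
    left. apply Hpos. lra. }
  assert (DGp : forall u, u <= 8*e -> 0 <= Derive G u).
  { intros u Hu. destruct (Rlt_le_dec u (2*e)). rewrite DG0 by lra; lra.
    rewrite DGB by lra. destruct (Rlt_le_dec (4*e) u). rewrite DBsI by lra; lra.
    rewrite DBsE by lra. destruct (Req_dec u (2*e)) as [->|]. lra.
    left. apply Hpos. lra. }
  assert (DHnm : forall u, -8*e <= u <= -9*e/4 -> m <= Derive Hn u).
  { intros u Hu. rewrite DHnB by lra. destruct (Rlt_le_dec u (-4*e)). rewrite DBsI by lra; lra.
    rewrite DBsE by lra. pose proof (Hp1 u ltac:(lra)). lra. }
  assert (DGm : forall u, 9*e/4 <= u <= 8*e -> m <= Derive G u).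
  { intros u Hu. rewrite DGB by lra. destruct (Rlt_le_dec (4*e) u). rewrite DBsI by lra; lra.
    rewrite DBsE by lra. pose proof (Hp2 u ltac:(lra)). lra. }
  assert (HbL : forall L, 30*e <= L -> forall t, -L-8*e <= t <= L+8*e -> beta_L bs L t = Hn (t+L) + G (t + -L)).
  { intros L HL t Ht. unfold beta_L. destruct (Rle_dec t (-L)).
    - rewrite (GZ (t + -L)) by lra. destruct (Rlt_le_dec (t+L) 0).
      + rewrite HnB by lra. rewrite BsE by lra. ring.
      + rewrite HnZ by lra. rewrite Hzero by lra. ring.
    - destruct (Rle_dec t L).
      + rewrite HnZ by lra. rewrite GZ by lra. ring.
      + rewrite HnZ by lra. rewrite GB by lra. rewrite BsE by lra. replace (t + -L) with (t - L) by ring. ring. }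
  assert (Hn8 : Hn (-8*e) = -8*e) by (rewrite HnB by lra; apply BsI; lra).
  assert (G8 : G (8*e) = 8*e) by (rewrite GB by lra; apply BsI; lra).
  exact (construct e kappa m M Hn G (beta_L bs) He Hk Hm0 Hm1 HM1 CHn CG GZ G1 Gb DG0 DG1 DGM HnZ DHn0 DHnp DGp DHnm DGm HbL Hn8 G8).
Qed.
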